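(* For every integer $n\ge1$, $$\sum_{\ell=1}^n\sum_{k=1}^n\Big(\frac1{n^2}\Big)^{\frac{\ell}{\ell+1}\cdot\frac{k}{k+1}}\ \le\ 1+2e^{4/e}+2e^{8/e}+e^{32/e}.$$ *)

(* Defs.v *)
From Stdlib Require Import Reals.
Open Scope R_scope.

Definition term (n l k : nat) : R :=
  Rpower (/ (INR n ^ 2)) ((INR l / (INR l + 1)) * (INR k / (INR k + 1))).

(* double sum over l = 1..n, k = 1..n ; sum_f_R0 f m = f 0 + ... + f m *)
Definition double_sum (n : nat) : R :=
  sum_f_R0 (fun i => sum_f_R0 (fun j => term n (S i) (S j)) (n - 1)) (n - 1).

(* Main.v *)
Require Import Defs.
From Stdlib Require Import Reals Lra Lia.
Open Scope R_scope.

Lemma exp_le' x y : x <= y -> exp x <= exp y.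
Proof.
  intros H; destruct (Rle_lt_or_eq_dec _ _ H) as [H1|H1].
  - left; apply exp_increasing; exact H1.
  - rewrite H1; lra.
Qed.

Lemma conv t x y : 0 <= t <= 1 ->
  exp (t*x + (1-t)*y) <= t * exp x + (1-t) * exp y.
Proof.
  intros Ht. set (m := t*x + (1-t)*y).
  assert (Ex : exp x = exp m * exp (x - m)) by (rewrite <- exp_plus; f_equal; ring).
  assert (Ey : exp y = exp m * exp (y - m)) by (rewrite <- exp_plus; f_equal; ring).
  pose proof (exp_ineq1_le (x - m)). pose proof (exp_ineq1_le (y - m)).
  pose proof (exp_pos m).
  rewrite Ex, Ey.
  assert (t * (exp m * exp (x - m)) >= t * (exp m * (1 + (x - m)))) by
    (apply Rle_ge; apply Rmult_le_compat_l; [lra| apply Rmult_le_compat_l; lra]).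
  assert ((1-t) * (exp m * exp (y - m)) >= (1-t) * (exp m * (1 + (y - m)))) by
    (apply Rle_ge; apply Rmult_le_compat_l; [lra| apply Rmult_le_compat_l; lra]).
  assert (t * (exp m * (1 + (x - m))) + (1-t) * (exp m * (1 + (y - m))) = exp m)
    by (unfold m; ring).
  lra.
Qed.

Lemma u_bound L i : 0 <= L ->
  exp (2 * L * / (INR i + 2) - L) <= (/2)^i + 4 * / exp L.
Proof.
  intros HL.
  pose proof (pos_INR i) as Hi.
  set (t := 2 / (INR i + 2)).
  assert (Ht : 0 <= t <= 1).
  { unfold t; split.
    - apply Rlt_le, Rdiv_lt_0_compat; lra.
    - apply (Rmult_le_reg_r (INR i + 2)); [lra|].
      unfold Rdiv; rewrite Rmult_assoc, Rinv_l; lra. }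
  pose proof (conv t L (INR (i+2) * ln 2) Ht) as C.
  assert (E1 : t * L + (1 - t) * (INR (i + 2) * ln 2) = t*L + INR i * ln 2).
  { rewrite plus_INR; simpl INR. unfold t. field. lra. }
  rewrite E1, exp_plus in C.
  assert (P : forall k, exp (INR k * ln 2) = 2 ^ k).
  { intro k. rewrite <- Rpower_pow by lra. reflexivity. }
  rewrite P, P in C.
  rewrite pow_add in C. simpl (2^2) in C.
  pose proof (pow_lt 2 i ltac:(lra)) as H2.
  pose proof (exp_pos L) as HeL.
  pose proof (exp_pos (t*L)) as HtL.
  assert (E2 : exp (2 * L * / (INR i + 2) - L) = exp (t * L) * / exp L).
  { rewrite <- exp_Ropp, <- exp_plus. f_equal. unfold t. field. lra. }
  rewrite E2.
  assert (E3 : (/2)^i = / 2^i) by (rewrite pow_inv; reflexivity).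
  rewrite E3.
  assert (C2 : exp (t*L) * 2^i <= exp L + 4 * 2^i).
  { assert (t * exp L <= exp L) by nra.
    assert ((1-t) * (2^i * (2*(2*1))) <= 4 * 2^i) by nra. lra. }
  apply (Rmult_le_reg_r (2^i * exp L)); [nra|].
  replace (exp (t * L) * / exp L * (2 ^ i * exp L)) with (exp (t*L) * 2^i)
    by (field; lra).
  replace ((/ 2 ^ i + 4 * / exp L) * (2 ^ i * exp L)) with (exp L + 4 * 2^i)
    by (field; lra).
  exact C2.
Qed.

Lemma geo c N : sum_f_R0 (fun j => (/2)^j + c) N = 2 - (/2)^N + INR (S N) * c.
Proof.
  induction N as [|N IH].
  - simpl. lra.
  - rewrite tech5, IH. rewrite (S_INR (S N)). simpl pow. lra.
Qed.

Theorem mainTheorem5 (n : nat) (hn : (1 <= n)%nat) :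
  double_sum n <=
  1 + 2 * exp (4 / exp 1) + 2 * exp (8 / exp 1) + exp (32 / exp 1).
Proof.
  assert (Hn : 1 <= INR n) by (apply (le_INR 1); exact hn).
  set (L := ln (INR n)).
  assert (HL : 0 <= L).
  { unfold L; rewrite <- ln_1. destruct (Rle_lt_or_eq_dec _ _ Hn) as [H|H].
    - left; apply ln_increasing; lra.
    - rewrite H; lra. }
  assert (HeL : exp L = INR n) by (unfold L; apply exp_ln; lra).
  set (u := fun i => exp (2 * L * / (INR i + 2) - L)).
  assert (Hterm : forall i j, term n (S i) (S j) <= u i * u j).
  { intros i j. unfold term, Rpower, u. rewrite <- exp_plus. apply exp_le'.
    rewrite ln_Rinv by (apply pow_lt; lra).
    rewrite ln_pow by lra. fold L.
    pose proof (pos_INR i). pose proof (pos_INR j).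
    assert (Ea : INR (S i) / (INR (S i) + 1) = 1 - / (INR i + 2))
      by (rewrite S_INR; field; lra).
    assert (Eb : INR (S j) / (INR (S j) + 1) = 1 - / (INR j + 2))
      by (rewrite S_INR; field; lra).
    rewrite Ea, Eb. simpl INR.
    assert (0 < / (INR i + 2)) by (apply Rinv_0_lt_compat; lra).
    assert (0 < / (INR j + 2)) by (apply Rinv_0_lt_compat; lra).
    set (p := / (INR i + 2)) in *. set (q := / (INR j + 2)) in *.
    assert (0 <= L * (p * q)) by (apply Rmult_le_pos; [lra|nra]). nra. }
  set (Su := sum_f_R0 u (n - 1)).
  assert (HS0 : 0 <= Su).
  { unfold Su. apply cond_pos_sum. intro; unfold u; left; apply exp_pos. }
  assert (HS : Su <= 6).
  { apply Rle_trans with (sum_f_R0 (fun j => (/2)^j + 4 * / INR n) (n-1)).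
    - apply sum_Rle. intros k _. unfold u. rewrite <- HeL. apply u_bound; exact HL.
    - rewrite geo. replace (S (n-1)) with n by lia.
      pose proof (pow_lt (/2) (n-1) ltac:(lra)).
      replace (INR n * (4 * / INR n)) with 4 by (field; lra). lra. }
  assert (HD : double_sum n <= Su * Su).
  { unfold double_sum.
    apply Rle_trans with (sum_f_R0 (fun i => sum_f_R0 (fun j => u j * u i) (n-1)) (n-1)).
    - apply sum_Rle; intros i _. apply sum_Rle; intros j _.
      rewrite Rmult_comm. apply Hterm.
    - right. unfold Su at 2. rewrite scal_sum. apply sum_eq. intros i _.
      rewrite <- scal_sum. fold Su. ring. }
  assert (H36 : 36 <= exp (32 / exp 1)).
  { pose proof exp_le_3. pose proof (exp_pos 1).
    assert (10 <= 32 / exp 1).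
    { apply (Rmult_le_reg_r (exp 1)); [lra|].
      unfold Rdiv; rewrite Rmult_assoc, Rinv_l by lra. lra. }
    set (x := 32 / exp 1) in *.
    replace x with (x/2 + x/2) by field. rewrite exp_plus.
    pose proof (exp_ineq1_le (x/2)). nra. }
  pose proof (exp_pos (4 / exp 1)). pose proof (exp_pos (8 / exp 1)).
  nra.
Qed.
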